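(* Consider a ReLU network with $L$ hidden layers, an input point $x \in \mathbb{R}^n$, and a convex distance function $\delta$ to $x$. Let $\mathcal{G}$ be the hierarchical search graph and let $A^x := (A^x_1)$ be the $1$-layer partial activation pattern of $x$. Then for every $l \in [L]$ and every $l$-layer partial activation pattern $A$ with $R_A \neq \emptyset$, there is a path in $\mathcal{G}$ from $A^x$ to $A$ along which the values $\operatorname{dist}(R_B)$ of the visited patterns $B$ are monotonically nondecreasing.
   Context: The ReLU network with input dimension $n$ and $n_i$ neurons in hidden layer $i$ is given by $x^0 := x$, $z^{i+1} := W^i x^i + b^i$ for $i \in \{0,\dots,L-1\}$, $x^i := \max(0, z^i)$ (entrywise) for $i \in [L]$, and output $f(x) := W^L x^L + b^L$, where $W^i, b^i$ are real weight matrices and bias vectors of compatible dimensions; $z^i_j(v)$ denotes the $j$-th preactivation of layer $i$ at input $v$. For $l \in [L]$, an $l$-layer partial activation pattern is a tuple $A = (A_1,\dots,A_l)$ of functions $A_i : [n_i] \to \{-1,+1\}$; its region is $R_A := \{ v \in \mathbb{R}^n : A_i(j)\, z^i_j(v) \ge 0 \text{ for all } i \in [l], j \in [n_i]\}$ (a closed polyhedron). The activation pattern of an input $v$ has $A^v_i(j) = +1$ if $z^i_j(v) \ge 0$ and $-1$ otherwise; the $1$-layer pattern of $x$ is $(A^x_1)$. For $l \ge 2$, $\operatorname{parent}(A_1,\dots,A_l) := (A_1,\dots,A_{l-1})$, and $A$ is a child of $\operatorname{parent}(A)$. Two $l$-layer patterns are siblings if they have the same parent (for $l=1$, all $1$-layer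 patterns are siblings), and neighboring siblings if they differ on exactly one neuron of layer $l$. A convex distance function to $x$ is a convex, continuous function $\delta : \mathbb{R}^n \to [0,\infty)$ with bounded sublevel sets and $\delta(x)=0$ (e.g. $\delta(v) = \|v - x\|_p$); for a nonempty closed set $S$, $\operatorname{dist}(S) := \min_{v \in S}\delta(v)$. The hierarchical search graph $\mathcal{G}$ has as vertices all $l$-layer partial activation patterns with nonempty region, for $l \in [L]$; it has an edge between two $l$-layer patterns whenever they are neighboring siblings, and an edge between an $(l-1)$-layer pattern $B$ and a child $A$ of $B$ (with $R_A \neq \emptyset$) whenever $R_A$ has the smallest value of $\operatorname{dist}$ among all children of $B$ with nonempty region (equivalently $\operatorname{dist}(R_A) = \operatorname{dist}(R_B)$). *)

(* Defs.v *)
From HB Require Import structures.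
From mathcomp Require Import all_boot all_order all_algebra.
From mathcomp Require Import all_classical all_reals all_analysis.
Set Implicit Arguments. Unset Strict Implicit. Unset Printing Implicit Defensive.
Import Order.TTheory GRing.Theory Num.Theory.
Import numFieldNormedType.Exports.
Local Open Scope classical_set_scope.
Local Open Scope ring_scope.

(** Conventions.
    - Widths are given by [d : nat -> nat]: [d 0] is the input dimension n,
      and [d i] (i >= 1) is the number n_i of neurons of hidden layer i.
    - [W i : 'M_(d i.+1, d i)] and [b i : 'cV_(d i.+1)] are W^i and b^i.
      (Only i < L are used by the statement; the output layer plays no role.)
    - Hidden layer i (1-based in the paper) is indexed here by k = i-1 (0-based).
    - A sign +1 is encoded by [true], -1 by [false]. *)

Section Network.
Variables (R : realType) (d : nat -> nat).
Variables (W : forall i, 'M[R]_(d i.+1, d i)) (b : forall i, 'cV[R]_(d i.+1)).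

Definition relu (t : R) : R := Num.max 0 t.

Fixpoint postact (v : 'cV[R]_(d 0%N)) (k : nat) : 'cV[R]_(d k) :=
  match k return 'cV[R]_(d k) with
  | 0%N => v
  | k'.+1 => map_mx relu (W k' *m postact v k' + b k')
  end.

(** preact v k = z^{k+1}(v) *)
Definition preact (v : 'cV[R]_(d 0%N)) (k : nat) : 'cV[R]_(d k.+1) :=
  W k *m postact v k + b k.

(** An l-layer partial activation pattern: for each layer k < l (paper layer
    k+1) a sign for each of its d k.+1 neurons. *)
Definition pattern (l : nat) := forall k : 'I_l, 'I_(d k.+1) -> bool.

Definition sgnb (s : bool) : R := if s then 1 else -1.

Definition region (l : nat) (A : pattern l) : set 'cV[R]_(d 0%N) :=
  [set v | forall (k : 'I_l) (j : 'I_(d k.+1)),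
           0 <= sgnb (A k j) * preact v k j ord0].

Definition first_pattern (v : 'cV[R]_(d 0%N)) : pattern 1 :=
  fun k j => 0 <= preact v k j ord0.
Arguments first_pattern v _ _.

Definition parent (l : nat) (A : pattern l.+1) : pattern l :=
  fun k j => A (widen_ord (leqnSn l) k) j.
Arguments parent {l} A _ _.

Definition is_parent (l : nat) (B : pattern l) (A : pattern l.+1) : Prop :=
  forall k j, parent A k j = B k j.

Definition neighboring_siblings (l : nat) (A B : pattern l.+1) : Prop :=
  (forall k j, parent A k j = parent B k j) /\
  #|[set j : 'I_(d l.+1) | A ord_max j != B ord_max j]| = 1%N.

Definition convex_distance_function (x : 'cV[R]_(d 0%N))
    (delta : 'cV[R]_(d 0%N) -> R) : Prop :=
  [/\ forall u v (t : R), 0 <= t <= 1 ->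
        delta (t *: u + (1 - t) *: v) <= t * delta u + (1 - t) * delta v,
      continuous delta,
      forall c : R, bounded_set [set v | delta v <= c],
      forall v, 0 <= delta v
    & delta x = 0].

(** dist(S) = min_{v in S} delta v; for the nonempty closed sets considered
    this minimum is attained, so it coincides with the infimum. *)
Definition dist (delta : 'cV[R]_(d 0%N) -> R) (S : set 'cV[R]_(d 0%N)) : R :=
  inf (delta @` S).

Definition vertex := {l : nat & pattern l}.

Definition vregion (B : vertex) := region (projT2 B).

Definition is_vertex (L : nat) (B : vertex) : Prop :=
  (0 < projT1 B <= L)%N /\ vregion B !=set0.

(** Edge relation (before requiring both endpoints to be vertices). *)
Inductive gedge (delta : 'cV[R]_(d 0%N) -> R) : vertex -> vertex -> Prop :=
  | gedge_sib (l : nat) (A B : pattern l.+1) :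
      neighboring_siblings A B ->
      gedge delta (existT _ l.+1 A) (existT _ l.+1 B)
  | gedge_down (l : nat) (B : pattern l) (A : pattern l.+1) :
      is_parent B A ->
      (forall A' : pattern l.+1, is_parent B A' -> region A' !=set0 ->
         dist delta (region A) <= dist delta (region A')) ->
      gedge delta (existT _ l B) (existT _ l.+1 A)
  | gedge_up (l : nat) (B : pattern l) (A : pattern l.+1) :
      is_parent B A ->
      (forall A' : pattern l.+1, is_parent B A' -> region A' !=set0 ->
         dist delta (region A) <= dist delta (region A')) ->
      gedge delta (existT _ l.+1 A) (existT _ l B).

Definition G_edge (L : nat) (delta : 'cV[R]_(d 0%N) -> R) (u v : vertex) : Prop :=
  [/\ is_vertex L u, is_vertex L v & gedge delta u v].

Fixpoint G_path (L : nat) (delta : 'cV[R]_(d 0%N) -> R) (p : seq vertex) : Prop :=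
  match p with
  | u :: ((v :: _) as p') => G_edge L delta u v /\ G_path L delta p'
  | _ => True
  end.

Fixpoint dist_monotone (delta : 'cV[R]_(d 0%N) -> R) (p : seq vertex) : Prop :=
  match p with
  | u :: ((v :: _) as p') =>
      dist delta (vregion u) <= dist delta (vregion v) /\ dist_monotone delta p'
  | _ => True
  end.

End Network.

(* Main.v *)
Set Warnings "-notation-overridden,-ambiguous-paths,-notation-incompatible-prefix,-deprecated".
Require Import Defs.
From HB Require Import structures.
From mathcomp Require Import all_boot all_order all_algebra.
From mathcomp Require Import all_classical all_reals all_analysis.
From mathcomp Require Import ring lra.
Import Order.TTheory GRing.Theory Num.Theory.
Local Open Scope classical_set_scope.
Local Open Scope ring_scope.

Section Proof5.
Variables (R : realType) (d : nat -> nat).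
Variables (W : forall i, 'M[R]_(d i.+1, d i)) (b : forall i, 'cV[R]_(d i.+1)).
Variables (L : nat) (x : 'cV[R]_(d 0%N)) (delta : 'cV[R]_(d 0%N) -> R).
Hypothesis hdel : convex_distance_function x delta.

Lemma sgnbN s : sgnb R (~~ s) = - sgnb R s.
Proof. by case: s; rewrite /sgnb /= ?opprK. Qed.

Lemma delta_ge0 v : 0 <= delta v.
Proof. by case: hdel. Qed.

Lemma dist_le (S : set 'cV[R]_(d 0%N)) v : S v -> dist delta S <= delta v.
Proof.
move=> Sv; apply: ge_inf; last by exists v.
by exists 0 => _ [w _ <-]; exact: delta_ge0.
Qed.
Arguments dist_le {S v}.


Lemma dist_lb (S : set 'cV[R]_(d 0%N)) c : S !=set0 ->
  (forall v, S v -> c <= delta v) -> c <= dist delta S.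
Proof.
move=> [v Sv] h; apply: lb_le_inf; first by exists (delta v), v.
by move=> _ [w Sw <-]; exact: h.
Qed.
Arguments dist_lb {S c}.


Lemma dist_ge0 (S : set 'cV[R]_(d 0%N)) : S !=set0 -> 0 <= dist delta S.
Proof. by move=> h; apply: dist_lb => // v _; exact: delta_ge0. Qed.

Lemma dist_approx (S : set 'cV[R]_(d 0%N)) e : S !=set0 -> 0 < e ->
  exists2 v, S v & delta v <= dist delta S + e.
Proof.
move=> [v Sv] e0.
have [] := @inf_lt _ (delta @` S) (dist delta S + e); first by exists (delta v), v.
  by rewrite /dist ltrDl.
by move=> _ [w Sw <-] lt; exists w => //; exact: ltW.
Qed.
Arguments dist_approx {S e}.


Lemma dist_sub (S1 S2 : set 'cV[R]_(d 0%N)) : S1 `<=` S2 -> S1 !=set0 ->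
  dist delta S2 <= dist delta S1.
Proof.
move=> sub ne; apply: dist_lb => // v S1v; exact/dist_le/sub.
Qed.
Arguments dist_sub {S1 S2}.


Definition cosign (p q : R) := (0 <= p /\ 0 <= q) \/ (p <= 0 /\ q <= 0).

Lemma relu_interp (p q t : R) : 0 <= t <= 1 -> cosign p q ->
  relu (t * p + (1 - t) * q) = t * relu p + (1 - t) * relu q.
Proof.
move=> /andP[t0 t1] [[p0 q0]|[p0 q0]]; rewrite /relu.
- have h : 0 <= t * p + (1 - t) * q.
    by rewrite addr_ge0 // mulr_ge0 // subr_ge0.
  by rewrite !max_r.
- have h : t * p + (1 - t) * q <= 0.
    rewrite -oppr_ge0 opprD -!mulrN addr_ge0 // mulr_ge0 ?subr_ge0 ?oppr_ge0 //.
  by rewrite !max_l // !mulr0 addr0.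
Qed.

Definition copat (v c : 'cV[R]_(d 0%N)) k :=
  forall k', (k' < k)%N -> forall j, cosign (preact W b v k' j ord0) (preact W b c k' j ord0).

Lemma affine_step m n (M : 'M[R]_(m, n)) (bb : 'cV[R]_m) X Y t :
  M *m (t *: X + (1 - t) *: Y) + bb = t *: (M *m X + bb) + (1 - t) *: (M *m Y + bb).
Proof.
rewrite mulmxDr -!scalemxAr !scalerDr addrACA -scalerDl.
by rewrite [t + _]addrC subrK scale1r.
Qed.
Lemma postact_interp v c t k : 0 <= t <= 1 -> copat v c k ->
  postact W b (t *: v + (1 - t) *: c) k = t *: postact W b v k + (1 - t) *: postact W b c k.
Proof.
move=> ht; elim: k => [|k IH] hc //=.
rewrite IH; last by move=> k' lt; apply: hc; exact: leqW.
rewrite affine_step; apply/matrixP => i j; rewrite !mxE (ord1 j).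
rewrite relu_interp //; have := hc k (ltnSn k) i; by rewrite /preact !mxE.
Qed.

Lemma preact_interp v c t k : 0 <= t <= 1 -> copat v c k ->
  preact W b (t *: v + (1 - t) *: c) k = t *: preact W b v k + (1 - t) *: preact W b c k.
Proof. by move=> ht hc; rewrite /preact postact_interp // affine_step. Qed.

Lemma fin_argmax (I : finType) (P : pred I) (F : I -> R) i0 : P i0 ->
  exists i, P i /\ forall j, P j -> F j <= F i.
Proof.
move=> Pi0; case: (arg_maxP F Pi0) => i Pi h; exists i; split=> // j Pj; exact: h.
Qed.

Definition flip l (A : pattern d l.+1) (j0 : 'I_(d l.+1)) : pattern d l.+1 :=
  fun k j => if ((k : nat) == l) && ((j : nat) == j0) then ~~ A k j else A k j.

Lemma flip_low l A j0 (k : 'I_l.+1) j : (k < l)%N -> @flip l A j0 k j = A k j.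
Proof. by move=> lt; rewrite /flip (ltn_eqF lt). Qed.

Lemma flip_top l A j0 (j : 'I_(d l.+1)) :
  @flip l A j0 ord_max j = if j == j0 then ~~ A ord_max j else A ord_max j.
Proof. by rewrite /flip /= eqxx. Qed.

Definition same_parent l (A C : pattern d l.+1) :=
  forall k j, @parent d l A k j = @parent d l C k j.

Arguments same_parent {l}.

Lemma par_low l (A C : pattern d l.+1) : same_parent A C ->
  forall (k : 'I_l.+1), (k < l)%N -> forall j, A k j = C k j.
Proof.
move=> h k lt; have -> : k = widen_ord (leqnSn l) (Ordinal lt) by apply: val_inj.
exact: h.
Qed.
Arguments par_low {l A C}.


Lemma regionP l (A : pattern d l.+1) v : region W b A v <->
  (forall (k : 'I_l.+1) j, (k < l)%N -> 0 <= sgnb R (A k j) * preact W b v k j ord0) /\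
  (forall j : 'I_(d l.+1), 0 <= sgnb R (A ord_max j) * preact W b v l j ord0).
Proof.
split.
- by move=> h; split=> [k j _|j]; [exact: h| exact: (h ord_max j)].
- move=> [h1 h2] k; case: (ltnP k l) => [lt j|ge]; first exact: h1.
  have -> : k = ord_max by apply: val_inj; apply/eqP; rewrite eqn_leq ge -ltnS ltn_ord.
  exact: h2.
Qed.

Lemma cosign_sgn s p q : 0 <= sgnb R s * p -> 0 <= sgnb R s * q -> cosign p q.
Proof.
case: s; rewrite /sgnb ?mul1r ?mulN1r => hp hq; first by left; split.
by right; split; lra.
Qed.

Definition tval (a c : R) := if a - c == 0 then 1 else - c / (a - c).

Lemma tvalP a c : 0 <= a -> c <= 0 ->
  [/\ 0 <= tval a c, tval a c <= 1 & c + tval a c * (a - c) = 0].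
Proof.
move=> a0 c0; rewrite /tval; case: eqP => [e|ne].
- by split; lra.
- have pos : 0 < a - c by rewrite lt_neqAle eq_sym; apply/andP; split; [apply/eqP|lra].
  split.
  + by rewrite divr_ge0 //; lra.
  + by rewrite ler_pdivrMr // mul1r; lra.
  + by rewrite divfK ?subrr //; apply/eqP.
Qed.

Lemma copat_le v c k k' : (k' <= k)%N -> copat v c k -> copat v c k'.
Proof. by move=> le h m lt; apply: h; exact: leq_trans lt le. Qed.

Lemma sgn_interp (s t p q : R) : s * (t * p + (1 - t) * q) = t * (s * p) + (1 - t) * (s * q).
Proof. by ring. Qed.

Lemma entry_interp m (P Q : 'cV[R]_m) t i :
  (t *: P + (1 - t) *: Q) i ord0 = t * P i ord0 + (1 - t) * Q i ord0.
Proof. by rewrite !mxE. Qed.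

Lemma seg_step l (A C : pattern d l.+1) v c (j1 : 'I_(d l.+1)) :
  same_parent A C -> region W b A v -> region W b C c ->
  A ord_max j1 != C ord_max j1 ->
  exists j, A ord_max j != C ord_max j /\
   exists2 w, region W b (@flip l A j) w & delta w <= Num.max (delta v) (delta c).
Proof.
move=> hp hv hc hj1.
have [hv1 hv2] := (@regionP l A v).1 hv.
have [hc1 hc2] := (@regionP l C c).1 hc.
have cp : copat v c l.
  move=> k' lt j.
  have h1 := hv1 (widen_ord (leqnSn l) (Ordinal lt)) j lt.
  have h2 := hc1 (widen_ord (leqnSn l) (Ordinal lt)) j lt.
  rewrite -(par_low hp) // in h2.
  exact: cosign_sgn h1 h2.
pose a := fun i : 'I_(d l.+1) => sgnb R (A ord_max i) * preact W b v l i ord0.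
pose cc := fun i : 'I_(d l.+1) => sgnb R (A ord_max i) * preact W b c l i ord0.
have a0 : forall i, 0 <= a i by move=> i; exact: hv2.
have ccD : forall i, A ord_max i != C ord_max i -> cc i <= 0.
  move=> i; have := hc2 i; rewrite /cc /sgnb.
  by case: (A ord_max i); case: (C ord_max i) => //= h _; lra.
have ccS : forall i, A ord_max i = C ord_max i -> 0 <= cc i.
  by move=> i e; have := hc2 i; rewrite /cc e.
pose tt := fun i => tval (a i) (cc i).
have [j [hjD hjmax]] := @fin_argmax _ (fun i => A ord_max i != C ord_max i) tt j1 hj1.
have [t0 t1 tj] := @tvalP _ _ (a0 j) (ccD j hjD).
set t := tval (a j) (cc j) in t0 t1 tj.
have ht : 0 <= t <= 1 by rewrite t0 t1.
exists j; split=> //; exists (t *: v + (1 - t) *: c).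
- apply/regionP; split.
  + move=> k jj lt; rewrite flip_low // preact_interp //; last exact: copat_le (ltnW lt) cp.
    rewrite entry_interp sgn_interp.
    have h1 := hv1 k jj lt; have h2 := hc1 k jj lt; rewrite -(par_low hp) // in h2.
    by apply: addr_ge0; apply: mulr_ge0 => //; lra.
  + move=> i; rewrite flip_top preact_interp // entry_interp sgn_interp.
    case: eqP => [->|ne].
    * rewrite sgnbN !mulNr.
      have : t * a j + (1 - t) * cc j = 0 by rewrite /a /cc in tj *; lra.
      rewrite /a /cc => e; lra.
    * case: (boolP (A ord_max i != C ord_max i)) => [hiD|].
      - have [s0 s1 si] := @tvalP _ _ (a0 i) (ccD i hiD).
        have le := hjmax i hiD; rewrite /tt -/t in le.
        have ai := a0 i; have ci := ccD i hiD.
        have : 0 <= t * a i + (1 - t) * cc i by nra.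
        by rewrite /a /cc.
      - rewrite negbK => /eqP e.
        have ai := a0 i; have ci := ccS i e.
        have : 0 <= t * a i + (1 - t) * cc i by apply: addr_ge0; apply: mulr_ge0 => //; lra.
        by rewrite /a /cc.
- have [hconv _ _ _ _] := hdel.
  apply: le_trans (hconv v c t ht) _.
  have := delta_ge0 v; have := delta_ge0 c.
  have mv : delta v <= Num.max (delta v) (delta c) by rewrite le_max lexx.
  have mc : delta c <= Num.max (delta v) (delta c) by rewrite le_max lexx orbT.
  nra.
Qed.
Arguments seg_step {l A C v c j1}.


Lemma flip_good l (A C : pattern d l.+1) (m : R) (j1 : 'I_(d l.+1)) :
  same_parent A C -> region W b A !=set0 ->
  (forall e, 0 < e -> exists2 c, region W b C c & delta c <= m + e) ->
  m <= dist delta (region W b A) -> A ord_max j1 != C ord_max j1 ->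
  exists j, A ord_max j != C ord_max j /\ region W b (@flip l A j) !=set0 /\
    dist delta (region W b (@flip l A j)) <= dist delta (region W b A).
Proof.
move=> hp neA hC hm hj1.
set dA := dist delta (region W b A).
pose Pj j e := exists2 w, region W b (@flip l A j) w & delta w <= dA + e.
have claim : forall e, 0 < e -> exists j, A ord_max j != C ord_max j /\ Pj j e.
  move=> e e0; have [v Av dv] := dist_approx neA e0.
  have [c Cc dc] := hC e e0.
  have [j [jD [w Bw dw]]] := seg_step hp Av Cc hj1.
  exists j; split => //; exists w => //.
  apply: le_trans dw _; rewrite ge_max dv /=; lra.
have mono : forall j e e', e <= e' -> Pj j e -> Pj j e'.
  by move=> j e e' le [w Bw dw]; exists w => //; lra.
have [[j [jD hj]]|nH] := pselect (exists j, A ord_max j != C ord_max j /\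
                                   forall e, 0 < e -> Pj j e).
  exists j; split => //; split.
    by have [w Bw _] := hj 1 ltr01; exists w.
  apply/ler_addgt0Pr => e e0; have [w Bw dw] := hj e e0.
  exact: le_trans (dist_le Bw) dw.
have H : forall j, exists e, 0 < e /\ (A ord_max j != C ord_max j -> ~ Pj j e).
  move=> j; case: (boolP (A ord_max j != C ord_max j)) => jD; last by exists 1.
  have : ~ forall e, 0 < e -> Pj j e by move=> h; apply: nH; exists j.
  move=> /existsNP [e /not_implyP [e0 ne]]; by exists e.
have [f hf] := choice H.
have [i [_ hi]] := @fin_argmax _ predT (fun j => - f j) j1 isT.
have [j [jD Pje]] := claim (f i) (hf i).1.
case: ((hf j).2 jD); apply: mono Pje.
by have := hi j isT; rewrite lerN2.
Qed.

Definition vtx l (A : pattern d l) : vertex d := existT _ l A.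
Arguments vtx {l}.

Definition step (u v : vertex d) :=
  G_edge W b L delta u v /\ dist delta (vregion W b u) <= dist delta (vregion W b v).

Inductive reach : vertex d -> vertex d -> Prop :=
  | reach_refl u : reach u u
  | reach_cons u v w : step u v -> reach v w -> reach u w.
Arguments reach_cons {u v w}.
Arguments reach_refl u : clear implicits.

Lemma reach_trans u v w : reach u v -> reach v w -> reach u w.
Proof.
elim=> [//|u1 v1 w1 s _ IH] h; exact: (reach_cons s (IH h)).
Qed.
Arguments reach_trans {u v w}.

Lemma reach_snoc u v w : reach u v -> step v w -> reach u w.
Proof. move=> h s; apply: reach_trans h (reach_cons s (reach_refl _)). Qed.

Lemma reach_path u w : reach u w -> exists p,
  [/\ G_path W b L delta (u :: p), dist_monotone W b delta (u :: p) & last u p = w].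
Proof.
elim=> [u1|u1 v1 w1 [e m] _ [p [gp mp lp]]]; first by exists [::].
by exists (v1 :: p); split.
Qed.

Lemma pat_eq l (A C : pattern d l.+1) : same_parent A C ->
  (forall j, A ord_max j = C ord_max j) -> A = C.
Proof.
move=> hp h; apply: functional_extensionality_dep => k.
case: (ltnP k l) => [lt|ge].
  by apply: funext => j; exact: par_low.
have -> : k = ord_max by apply: val_inj; apply/eqP; rewrite eqn_leq ge -ltnS ltn_ord.
by apply: funext => j; exact: h.
Qed.

Definition diffc l (A C : pattern d l.+1) :=
  #|[pred j : 'I_(d l.+1) | A ord_max j != C ord_max j]|.
Arguments diffc {l}.

Lemma diffc_flip l (A C : pattern d l.+1) (j : 'I_(d l.+1)) :
  A ord_max j != C ord_max j -> diffc A C = (diffc (@flip l A j) C).+1.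
Proof.
move=> jD; rewrite /diffc (cardD1 j) inE jD add1n; congr S.
apply: eq_card => i; rewrite !inE flip_top.
case: eqP => [->|ne] /=; last by [].
by move: jD; case: (A ord_max j); case: (C ord_max j).
Qed.

Lemma flip_par l (A C : pattern d l.+1) j : same_parent A C -> same_parent (@flip l A j) C.
Proof.
by move=> hp k jj; rewrite -hp /parent flip_low //= ltn_ord.
Qed.
Arguments flip_good {l A C m j1}.
Arguments diffc_flip {l A C j}.
Arguments flip_par {l A C}.

Lemma sib_path l (C : pattern d l.+1) (m : R) :
  (l.+1 <= L)%N ->
  (forall e, 0 < e -> exists2 c, region W b C c & delta c <= m + e) ->
  (forall A, same_parent A C -> region W b A !=set0 -> m <= dist delta (region W b A)) ->
  forall A, same_parent A C -> region W b A !=set0 -> reach (vtx C) (vtx A).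
Proof.
move=> lL hC hm A.
move: {2}(diffc A C) (erefl (diffc A C)) => n; elim: n A => [|n IH] A hn hp neA.
  have -> : A = C; last exact: reach_refl.
  apply: pat_eq => // j; apply/eqP.
  have h := card0_eq hn j; rewrite !inE in h; exact: negbFE h.
have [j1 hj1] : exists j1, j1 \in [pred j : 'I_(d l.+1) | A ord_max j != C ord_max j].
  by apply/card_gt0P; rewrite -/(diffc A C) hn.
rewrite inE in hj1.
have [j [jD [neB dB]]] := flip_good hp neA hC (hm A hp neA) hj1.
have hB : diffc (@flip l A j) C = n by have := diffc_flip jD; rewrite hn => -[].
apply: reach_snoc (IH _ hB (flip_par j hp) neB) _.
split; last exact: dB.
split.
- by split.
- by split.
- apply: gedge_sib; split.
  + by move=> k jj; rewrite /parent flip_low //= ltn_ord.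
  + rewrite -(card1 j); apply: eq_card => i; apply/idP/idP; rewrite in_setE /= flip_top inE;
    by case: (i == j); case: (A ord_max i).
Qed.

Definition mkc l (A : pattern d l.+1) (s : {ffun 'I_(d l.+1) -> bool}) : pattern d l.+1 :=
  fun k j => if (k : nat) == l then oapp s false (insub (val j) : option 'I_(d l.+1))
             else A k j.
Arguments mkc {l}.

Lemma mkc_par l (A : pattern d l.+1) s : same_parent (mkc A s) A.
Proof. by move=> k jj; rewrite /parent /mkc /= ltn_eqF. Qed.

Lemma mkc_top l (A : pattern d l.+1) s (j : 'I_(d l.+1)) : mkc A s ord_max j = s j.
Proof. by rewrite /mkc /= eqxx valK. Qed.

Lemma mkc_eq l (A A' : pattern d l.+1) : same_parent A' A ->
  mkc A [ffun j => A' ord_max j] = A'.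
Proof.
move=> hp; apply: pat_eq.
  by move=> k j; rewrite mkc_par hp.
by move=> j; rewrite mkc_top ffunE.
Qed.

Lemma region_par l (B : pattern d l) (A : pattern d l.+1) :
  is_parent B A -> region W b A `<=` region W b B.
Proof. by move=> h v hv k j; rewrite -h; exact: hv. Qed.

Lemma sp_sym l (A C : pattern d l.+1) : same_parent A C -> same_parent C A.
Proof. by move=> h k j; rewrite h. Qed.

Lemma sp_trans l (A B C : pattern d l.+1) : same_parent A B -> same_parent B C -> same_parent A C.
Proof. by move=> h1 h2 k j; rewrite h1 h2. Qed.

Lemma first_in : region W b (first_pattern W b x) x.
Proof.
move=> k j; rewrite /first_pattern /sgnb; case: ifP => h; first by rewrite mul1r.
move/negbT: h; rewrite -ltNge => h; rewrite mulN1r oppr_ge0; exact: ltW.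
Qed.

Lemma main_reach l : (l.+1 <= L)%N -> forall A : pattern d l.+1,
  region W b A !=set0 -> reach (vtx (first_pattern W b x)) (vtx A).
Proof.
elim: l => [|l IH] lL A neA.
  apply: (@sib_path 0 _ 0) => //.
  - move=> e e0; exists x; first exact: first_in.
    by have [_ _ _ _ ->] := hdel; rewrite add0r ltW.
  - by move=> A' _ neA'; exact: dist_ge0.
  - by case.
have hPA : is_parent (parent A) A by [].
have neP : region W b (parent A) !=set0.
  by case: neA => v hv; exists v; exact: region_par hPA _ hv.
have rP := IH (ltnW lL) _ neP.
pose F := fun s : {ffun 'I_(d l.+2) -> bool} => - dist delta (region W b (mkc A s)).
pose P := fun s : {ffun 'I_(d l.+2) -> bool} => `[< region W b (mkc A s) !=set0 >].
have P0 : P [ffun j => A ord_max j] by apply/asboolP; rewrite mkc_eq.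
have [s [Ps hs]] := @fin_argmax _ P F _ P0.
move/asboolP: Ps => neC.
set C := mkc A s in neC.
have hmin : forall A', same_parent A' A -> region W b A' !=set0 ->
    dist delta (region W b C) <= dist delta (region W b A').
  move=> A' hp neA'.
  have := hs [ffun j => A' ord_max j]; rewrite /P /F mkc_eq // lerN2; apply.
  exact/asboolP.
have hCP : is_parent (parent A) C by move=> k j; rewrite mkc_par.
apply: reach_trans rP _.
apply: reach_cons; last first.
  apply: (@sib_path l.+1 C (dist delta (region W b C))) => //.
  - by move=> e e0; exact: dist_approx neC e0.
  - move=> A' hp neA'; apply: hmin => //; exact: (@sp_trans _ _ _ _ hp (mkc_par _ A s)).
split.
- split.
  + by split => //; exact: ltnW.
  + by split.
  + apply: gedge_down => [|A' hp neA']; first exact: hCP.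
    apply: hmin => //.
- by apply: dist_sub => //; exact: region_par.
Qed.

End Proof5.

Theorem mainTheorem5 (R : realType) (d : nat -> nat)
  (W : forall i, 'M[R]_(d i.+1, d i)) (b : forall i, 'cV[R]_(d i.+1))
  (L : nat) (x : 'cV[R]_(d 0%N)) (delta : 'cV[R]_(d 0%N) -> R) :
  convex_distance_function x delta ->
  forall (l : nat) (A : pattern d l),
    (1 <= l <= L)%N ->
    region W b A !=set0 ->
    exists p : seq (vertex d),
      [/\ head (existT _ 1%N (first_pattern W b x)) p
            = existT _ 1%N (first_pattern W b x),
          last (existT _ 1%N (first_pattern W b x)) p = existT _ l A,
          G_path W b L delta p
        & dist_monotone W b delta p].
Proof.
move=> hdel [|l] A /andP[l1 lL] neA //.
have r := @main_reach R d W b L x delta hdel l lL A neA.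
have [p [gp mp lp]] := @reach_path R d W b L delta _ _ r.
by exists (existT _ 1%N (first_pattern W b x) :: p); split.
Qed.
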